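(* Let $(G,X,\Gamma)$ be a $(\mu,\nu)$-path system group containing a $\delta$-constricting element $(g,A)$ with $\delta$-constricting map $\pi_A\colon X\to A$. For every $\varepsilon\ge0$ and $\theta\ge0$ there exists $M\in\mathbb N_{\ge1}$ with the following property. Let $H\le G$ be a subgroup and $Y\subseteq X$ a non-empty $H$-invariant subset with $\operatorname{diam}_A(Y)\le\varepsilon$. Then for every $u\in\langle g^M, H\cap E(g,A)\rangle\setminus (H\cap E(g,A))$, we have $d_A(Y,uY)>\theta$.
   Context: A path is a rectifiable continuous map $\alpha\colon[a,b]\to X$ parametrised by arc length; it is a $(\kappa,\lambda)$-quasi-geodesic if $d(\alpha(t),\alpha(t'))\le|t-t'|\le\kappa d(\alpha(t),\alpha(t'))+\lambda$. A $(\mu,\nu)$-path system group $(G,X,\Gamma)$ is a group $G$ acting properly by isometries on a geodesic metric space $X$ together with a $G$-invariant collection $\Gamma$ of paths closed under subpaths, such that any two points are joined by an element of $\Gamma$ and every element is a $(\mu,\nu)$-quasi-geodesic. A map $\pi_A\colon X\to A$ is $\delta$-constricting if (CS1) $d(x,\pi_A(x))\le\delta$ for $x\in A$, and (CS2) for all $x,y\in X$ and $\gamma\in\Gamma$ joining them, if $d(\pi_A(x),\pi_A(y))>\delta$ then $\gamma$ meets $B_X(\pi_A(x),\delta)$ and $B_X(\pi_A(y),\delta)$. An element $g$ is $\delta$-constricting, written $(g,A)$, if it has infinite order and $A$ is a $\langle g\rangle$-invariant subset with a $\delta$-constricting map, on which $\langle g\rangle$ acts $\delta$-coboundedly. $\operatorname{diam}_A(Y)=\operatorname{diam}(\pi_A(Y))$,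 $d_A(Y,Z)=\inf\{d(\pi_A(y),\pi_A(z)): y\in Y,z\in Z\}$. The elementary closure is $E(g,A)=\{u\in G: d_{Haus}(uA,A)<\infty\}$. *)

(* Defs.v *)
From Stdlib Require Import Reals List.
Open Scope R_scope.
Set Implicit Arguments.

Record Group := {
  gcar :> Type;
  gmul : gcar -> gcar -> gcar;
  gone : gcar;
  ginv : gcar -> gcar;
  gmulA : forall x y z, gmul x (gmul y z) = gmul (gmul x y) z;
  gmul1 : forall x, gmul gone x = x;
  gmulV : forall x, gmul (ginv x) x = gone
}.

Fixpoint gpow {G : Group} (g : G) (n : nat) : G :=
  match n with O => gone G | S k => gmul G g (gpow g k) end.

Definition is_subgroup {G : Group} (H : G -> Prop) : Prop :=
  H (gone G) /\ (forall x y, H x -> H y -> H (gmul G x y)) /\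
  (forall x, H x -> H (ginv G x)).

Definition generated {G : Group} (S : G -> Prop) : G -> Prop :=
  fun x => forall K : G -> Prop, is_subgroup K -> (forall s, S s -> K s) -> K x.

Definition infinite_order {G : Group} (g : G) : Prop :=
  forall n : nat, (1 <= n)%nat -> gpow g n <> gone G.

Record MetricSpace := {
  mcar :> Type;
  dist : mcar -> mcar -> R;
  dist_ge0 : forall x y, 0 <= dist x y;
  dist_eq0 : forall x y, dist x y = 0 <-> x = y;
  dist_sym : forall x y, dist x y = dist y x;
  dist_tri : forall x y z, dist x z <= dist x y + dist y z
}.

Section Metric.
Variable X : MetricSpace.
Local Notation d := (dist X).

Definition geodesic_space : Prop :=
  forall x y : X, exists c : R -> X,
    c 0 = x /\ c (d x y) = y /\
    forall s t, 0 <= s <= d x y -> 0 <= t <= d x y -> d (c s) (c t) = Rabs (s - t).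

(** A path: a map f defined on the interval [pa, pb] *)
Record Path := mkPath { pa : R; pb : R; pf : R -> X }.

(** partitions s = t0 <= t1 <= ... <= tn = t, given as the list [t1;...;tn] *)
Fixpoint chain_from (x : R) (l : list R) (t : R) : Prop :=
  match l with nil => x = t | y :: r => x <= y /\ chain_from y r t end.

Fixpoint psum (f : R -> X) (x : R) (l : list R) : R :=
  match l with nil => 0 | y :: r => d (f x) (f y) + psum f y r end.

(** the length of f restricted to [s,t] is (finite and equal to) L *)
Definition length_is (f : R -> X) (s t L : R) : Prop :=
  is_lub (fun S => exists l, chain_from s l t /\ S = psum f s l) L.

Definition continuous_on (f : R -> X) (a b : R) : Prop :=
  forall t, a <= t <= b -> forall e, 0 < e -> exists h, 0 < h /\
    forall t', a <= t' <= b -> Rabs (t - t') < h -> d (f t) (f t') < e.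

Definition arclength_path (p : Path) : Prop :=
  pa p <= pb p /\ continuous_on (pf p) (pa p) (pb p) /\
  forall s t, pa p <= s -> s <= t -> t <= pb p -> length_is (pf p) s t (t - s).

Definition quasi_geodesic (k l : R) (p : Path) : Prop :=
  forall t t', pa p <= t <= pb p -> pa p <= t' <= pb p ->
    d (pf p t) (pf p t') <= Rabs (t - t') /\
    Rabs (t - t') <= k * d (pf p t) (pf p t') + l.

Definition joins (p : Path) (x y : X) : Prop := pf p (pa p) = x /\ pf p (pb p) = y.

Definition meets_ball (p : Path) (c : X) (r : R) : Prop :=
  exists t, pa p <= t <= pb p /\ d (pf p t) c <= r.

End Metric.

Arguments mkPath {X}.

Definition isometric_action {G : Group} {X : MetricSpace} (act : G -> X -> X) : Prop :=
  (forall x, act (gone G) x = x) /\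
  (forall g h x, act (gmul G g h) x = act g (act h x)) /\
  (forall g x y, dist X (act g x) (act g y) = dist X x y).

Definition proper_action {G : Group} {X : MetricSpace} (act : G -> X -> X) : Prop :=
  forall (x : X) (r : R), exists l : list G,
    forall g, dist X x (act g x) <= r -> In g l.

Definition path_system_group (mu nu : R) {G : Group} {X : MetricSpace}
  (act : G -> X -> X) (Gam : Path X -> Prop) : Prop :=
  geodesic_space X /\ isometric_action act /\ proper_action act /\
  (forall g p, Gam p -> Gam (mkPath (pa p) (pb p) (fun t => act g (pf p t)))) /\
  (forall p s t, Gam p -> pa p <= s -> s <= t -> t <= pb p ->
     Gam (mkPath s t (pf p))) /\
  (forall x y : X, exists p, Gam p /\ joins p x y) /\
  (forall p, Gam p -> arclength_path p /\ quasi_geodesic mu nu p).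

Definition constricting_map {X : MetricSpace} (Gam : Path X -> Prop)
  (A : X -> Prop) (piA : X -> X) (delta : R) : Prop :=
  (forall x, A (piA x)) /\
  (forall x, A x -> dist X x (piA x) <= delta) /\
  (forall (x y : X) p, Gam p -> joins p x y ->
     dist X (piA x) (piA y) > delta ->
     meets_ball p (piA x) delta /\ meets_ball p (piA y) delta).

Definition constricting_element {G : Group} {X : MetricSpace} (act : G -> X -> X)
  (Gam : Path X -> Prop) (g : G) (A : X -> Prop) (piA : X -> X) (delta : R) : Prop :=
  infinite_order g /\
  (forall x, A x -> A (act g x) /\ A (act (ginv G g) x)) /\
  constricting_map Gam A piA delta /\
  (exists x0, A x0 /\ forall y, A y ->
     exists n : nat, dist X y (act (gpow g n) x0) <= delta \/
                     dist X y (act (gpow (ginv G g) n) x0) <= delta).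

(** elementary closure E(g,A) = { u | d_Haus(uA, A) < oo } *)
Definition elem_closure {G : Group} {X : MetricSpace} (act : G -> X -> X)
  (A : X -> Prop) : G -> Prop :=
  fun u => exists r : R,
    (forall a, A a -> exists b, A b /\ dist X (act u a) b <= r) /\
    (forall b, A b -> exists a, A a /\ dist X b (act u a) <= r).

Definition diamA_le {X : MetricSpace} (piA : X -> X) (Y : X -> Prop) (eps : R) : Prop :=
  forall y y', Y y -> Y y' -> dist X (piA y) (piA y') <= eps.

(** d_A(Y,Z) > theta, where d_A(Y,Z) = inf { d(piA y, piA z) } *)
Definition dA_gt {X : MetricSpace} (piA : X -> X) (Y Z : X -> Prop) (theta : R) : Prop :=
  exists c, theta < c /\
    forall y z, Y y -> Z z -> c <= dist X (piA y) (piA z).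

Definition translate {G : Group} {X : MetricSpace} (act : G -> X -> X)
  (u : G) (Y : X -> Prop) : X -> Prop :=
  fun z => exists y, Y y /\ z = act u y.

(* Main.v *)
Require Import Defs.
From Stdlib Require Import Reals Lra Lia ZArith List Classical IndefiniteDescription.
Open Scope R_scope.

Section Grp.
Variable G : Group.
Local Infix "**" := (gmul G) (at level 40, left associativity).
Local Notation "1" := (gone G).
Local Notation inv := (ginv G).

Lemma gmulVr (x : G) : x ** inv x = 1.
Proof.
  rewrite <- (gmul1 G (x ** inv x)).
  rewrite <- (gmulV G (inv x)) at 1.
  rewrite <- gmulA. rewrite (gmulA G (inv x) x (inv x)). rewrite gmulV, gmul1.
  apply gmulV.
Qed.

Lemma gmul1r (x : G) : x ** 1 = x.
Proof. rewrite <- (gmulV G x), gmulA, gmulVr. apply gmul1. Qed.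

Lemma gmul_cancel_l (a x y : G) : a ** x = a ** y -> x = y.
Proof. intro H. rewrite <- (gmul1 G x), <- (gmul1 G y), <- (gmulV G a), <- !gmulA, H. reflexivity. Qed.

Lemma gmul_cancel_r (a x y : G) : x ** a = y ** a -> x = y.
Proof. intro H. rewrite <- (gmul1r x), <- (gmul1r y), <- (gmulVr a), !gmulA, H. reflexivity. Qed.

Lemma inv_unique (x y : G) : x ** y = 1 -> y = inv x.
Proof. intro H. apply (gmul_cancel_l x). rewrite H, gmulVr. reflexivity. Qed.

Lemma inv_inv (x : G) : inv (inv x) = x.
Proof. symmetry. apply inv_unique. apply gmulV. Qed.

Lemma inv_mul (x y : G) : inv (x ** y) = inv y ** inv x.
Proof. symmetry. apply inv_unique. rewrite gmulA, <- (gmulA G x y), gmulVr, gmul1r, gmulVr. reflexivity. Qed.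

Lemma inv_one : inv 1 = 1.
Proof. symmetry. apply inv_unique. apply gmul1. Qed.

Lemma gpow_add (g : G) (a b : nat) : gpow g (a + b) = gpow g a ** gpow g b.
Proof. induction a; simpl. rewrite gmul1; auto. rewrite IHa, gmulA. auto. Qed.

Lemma gpow_comm (g : G) (n : nat) : gpow g n ** g = g ** gpow g n.
Proof.
  change (g ** gpow g n) with (gpow g (S n)). replace (S n) with (n + 1)%nat by lia.
  rewrite gpow_add. simpl. rewrite gmul1r. auto.
Qed.

Lemma gpow_inv (g : G) (n : nat) : inv (gpow g n) = gpow (inv g) n.
Proof.
  induction n; simpl. apply inv_one.
  rewrite inv_mul, IHn. rewrite <- gpow_comm. auto.
Qed.

Definition zpow (g : G) (z : Z) : G :=
  if Z_le_dec 0 z then gpow g (Z.to_nat z) else gpow (inv g) (Z.to_nat (- z)).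

Lemma zpow_nat (g : G) (n : nat) : zpow g (Z.of_nat n) = gpow g n.
Proof. unfold zpow. destruct (Z_le_dec 0 (Z.of_nat n)); [|lia]. rewrite Nat2Z.id. auto. Qed.

Lemma zpow_succ (g : G) (z : Z) : zpow g (z + 1)%Z = g ** zpow g z.
Proof.
  unfold zpow. destruct (Z_le_dec 0 (z+1)), (Z_le_dec 0 z).
  - replace (Z.to_nat (z+1)) with (S (Z.to_nat z)) by lia. auto.
  - assert (z = -1)%Z by lia. subst. simpl. rewrite gmul1r, gmulVr. auto.
  - lia.
  - replace (Z.to_nat (- z)) with (S (Z.to_nat (- (z+1)))) by lia. simpl.
    rewrite gmulA, gmulVr, gmul1. auto.
Qed.

Lemma zpow_pred (g : G) (z : Z) : zpow g (z - 1)%Z = inv g ** zpow g z.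
Proof.
  replace (zpow g z) with (zpow g ((z - 1) + 1)%Z) by (f_equal; lia).
  rewrite zpow_succ, gmulA, gmulV, gmul1. auto.
Qed.

Lemma zpow0 (g : G) : zpow g 0 = 1.
Proof. reflexivity. Qed.

Lemma zpow1 (g : G) : zpow g 1 = g.
Proof. unfold zpow. simpl. apply gmul1r. Qed.

Lemma zpow_add (g : G) (a b : Z) : zpow g (a + b)%Z = zpow g a ** zpow g b.
Proof.
  induction a using Z.peano_ind.
  - simpl. rewrite gmul1. auto.
  - replace (Z.succ a + b)%Z with ((a + b) + 1)%Z by lia.
    rewrite zpow_succ, IHa, <- Z.add_1_r, zpow_succ, gmulA. auto.
  - replace (Z.pred a + b)%Z with ((a + b) - 1)%Z by lia.
    rewrite zpow_pred, IHa, <- Z.sub_1_r, zpow_pred, gmulA. auto.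
Qed.

Lemma zpow_opp (g : G) (a : Z) : zpow g (- a)%Z = inv (zpow g a).
Proof. apply inv_unique. rewrite <- zpow_add. replace (a + - a)%Z with 0%Z by lia. auto. Qed.

Lemma zpow_comm (g : G) (a b : Z) : zpow g a ** zpow g b = zpow g b ** zpow g a.
Proof. rewrite <- !zpow_add, Z.add_comm. auto. Qed.

Lemma zpow_mul (g : G) (a b : Z) : zpow (zpow g a) b = zpow g (a * b)%Z.
Proof.
  induction b using Z.peano_ind.
  - rewrite Z.mul_0_r. auto.
  - rewrite <- Z.add_1_r, zpow_succ, IHb, <- zpow_add. f_equal. lia.
  - rewrite <- Z.sub_1_r, zpow_pred, IHb, <- zpow_opp, <- zpow_add. f_equal. lia.
Qed.

Definition gconj (c x : G) : G := c ** x ** inv c.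

Lemma gconj_mul (c x y : G) : gconj c (x ** y) = gconj c x ** gconj c y.
Proof. unfold gconj. rewrite !gmulA, <- (gmulA G (c ** x) (inv c) c), gmulV, gmul1r. auto. Qed.

Lemma gconj_inv (c x : G) : gconj c (inv x) = inv (gconj c x).
Proof. unfold gconj. rewrite !inv_mul, inv_inv, gmulA. auto. Qed.

Lemma gconj_one (c : G) : gconj c 1 = 1.
Proof. unfold gconj. rewrite gmul1r, gmulVr. auto. Qed.

Lemma gconj_zpow (c h : G) (z : Z) : gconj c (zpow h z) = zpow (gconj c h) z.
Proof.
  induction z using Z.peano_ind.
  - apply gconj_one.
  - rewrite <- Z.add_1_r, !zpow_succ, gconj_mul, IHz. auto.
  - rewrite <- Z.sub_1_r, !zpow_pred, gconj_mul, IHz, gconj_inv. auto.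
Qed.

Lemma gconj_comp (a b x : G) : gconj a (gconj b x) = gconj (a ** b) x.
Proof. unfold gconj. rewrite inv_mul, !gmulA. auto. Qed.

Lemma gconj_inv_l (c x : G) : gconj (inv c) (gconj c x) = x.
Proof. rewrite gconj_comp, gmulV. unfold gconj. rewrite inv_one, gmul1, gmul1r. auto. Qed.

End Grp.
Section Geo.
Variables (mu nu : R) (G : Group) (X : MetricSpace) (act : G -> X -> X) (Gam : Path X -> Prop).
Hypothesis Hpsg : path_system_group mu nu act Gam.
Local Notation d := (Defs.dist X).

Lemma Gam_join x y : exists p, Gam p /\ joins p x y.
Proof. destruct Hpsg as (_&_&_&_&_&H&_). auto. Qed.

Lemma Gam_sub p s t : Gam p -> pa p <= s -> s <= t -> t <= pb p -> Gam (mkPath s t (pf p)).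
Proof. destruct Hpsg as (_&_&_&_&H&_). auto. Qed.

Lemma Gam_ab p : Gam p -> pa p <= pb p.
Proof. destruct Hpsg as (_&_&_&_&_&_&H). intro Hp. destruct (H p Hp) as [[? _] _]. auto. Qed.

Lemma Gam_qg p t t' : Gam p -> pa p <= t <= pb p -> pa p <= t' <= pb p ->
  d (pf p t) (pf p t') <= Rabs (t - t') /\ Rabs (t - t') <= mu * d (pf p t) (pf p t') + nu.
Proof. destruct Hpsg as (_&_&_&_&_&_&H). intros Hp. destruct (H p Hp) as [_ Q]. apply Q. Qed.

Lemma Gam_qg' p t t' : Gam p -> pa p <= t <= pb p -> pa p <= t' <= pb p ->
  d (pf p t) (pf p t') <= Rabs (t - t') /\ Rabs (t - t') <= Rabs mu * d (pf p t) (pf p t') + Rabs nu.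
Proof.
  intros Hp H1 H2. destruct (Gam_qg p t t' Hp H1 H2) as [Q1 Q2]. split; auto.
  pose proof (Defs.dist_ge0 X (pf p t) (pf p t')).
  pose proof (Rle_abs mu). pose proof (Rle_abs nu).
  assert (mu * d (pf p t) (pf p t') <= Rabs mu * d (pf p t) (pf p t')) by (apply Rmult_le_compat_r; auto).
  lra.
Qed.

Lemma tri (a b c : X) : d a c <= d a b + d b c.
Proof. apply Defs.dist_tri. Qed.
Lemma dsym (a b : X) : d a b = d b a.
Proof. apply Defs.dist_sym. Qed.
Lemma dge0 (a b : X) : 0 <= d a b.
Proof. apply Defs.dist_ge0. Qed.
Lemma dxx (a : X) : d a a = 0.
Proof. apply Defs.dist_eq0. auto. Qed.

Lemma abs_interval a b t t' : a <= t <= b -> a <= t' <= b -> Rabs (t - t') <= Rabs (a - b).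
Proof. intros. unfold Rabs. repeat destruct Rcase_abs; lra. Qed.

Lemma cm_delta_nonneg B p delta (x : X) : constricting_map Gam B p delta -> 0 <= delta.
Proof.
  intros (H1&H2&_). specialize (H2 (p x) (H1 x)). pose proof (dge0 (p x) (p (p x))). lra.
Qed.

Definition Lip delta s := 3 * delta + Rabs mu * s + Rabs nu.

Lemma cm_lip B p delta : constricting_map Gam B p delta ->
  forall x y, d (p x) (p y) <= Lip delta (d x y).
Proof.
  intros Hc x y. pose proof (cm_delta_nonneg B p delta x Hc) as Hd.
  unfold Lip. pose proof (Rabs_pos mu). pose proof (Rabs_pos nu).
  assert (0 <= Rabs mu * d x y) by (apply Rmult_le_pos; auto using dge0).
  destruct (Rle_dec (d (p x) (p y)) delta). lra.
  destruct (Gam_join x y) as (q & Hq & Hj1 & Hj2).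
  destruct Hc as (_&_&H3). destruct (H3 x y q Hq (conj Hj1 Hj2)) as [(t1&Ht1&D1) (t2&Ht2&D2)]. lra.
  pose proof (Gam_ab q Hq).
  destruct (Gam_qg' q t1 t2 Hq Ht1 Ht2) as [Q1 _].
  destruct (Gam_qg' q (pa q) (pb q) Hq ltac:(lra) ltac:(lra)) as [_ Q2].
  rewrite Hj1, Hj2 in Q2.
  pose proof (abs_interval _ _ _ _ Ht1 Ht2).
  pose proof (tri (p x) (pf q t1) (p y)). pose proof (tri (pf q t1) (pf q t2) (p y)).
  rewrite dsym in D1. lra.
Qed.

Lemma Lip_mono delta s s' : s <= s' -> Lip delta s <= Lip delta s'.
Proof. intros. unfold Lip. pose proof (Rabs_pos mu). assert (Rabs mu * s <= Rabs mu * s') by (apply Rmult_le_compat_l; auto). lra. Qed.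

Definition Kuniq delta := 3 * delta + Lip delta delta + Rabs mu * delta + Rabs nu.

Lemma cm_unique B p p' delta : constricting_map Gam B p delta -> constricting_map Gam B p' delta ->
  forall x, d (p x) (p' x) <= Kuniq delta.
Proof.
  intros Hc Hc' x. pose proof (cm_delta_nonneg B p delta x Hc) as Hd.
  pose proof (Rabs_pos mu). pose proof (Rabs_pos nu).
  assert (0 <= Rabs mu * delta) by (apply Rmult_le_pos; auto).
  assert (HL: 3*delta <= Lip delta delta). { unfold Lip. lra. }
  unfold Kuniq.
  destruct (Rle_dec (d (p x) (p' x)) (3 * delta + Lip delta delta + Rabs mu * delta + Rabs nu)) as [|Hn]; auto.
  exfalso. apply Rnot_le_lt in Hn.
  set (P := p x) in *. set (P' := p' x) in *.
  destruct Hc as (Bp & C1 & C2). destruct Hc' as (Bp' & C1' & C2').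
  destruct (Gam_join x P) as (be & Hbe & J1 & J2).
  pose proof (C1' P (Bp x)) as E1.
  assert (d P' (p' P) > delta).
  { pose proof (tri P (p' P) P'). rewrite (dsym (p' P) P') in H2. lra. }
  destruct (C2' x P be Hbe (conj J1 J2) H2) as [(t' & Ht' & D1) _].
  pose proof (Gam_ab be Hbe).
  set (be' := mkPath (pa be) t' (pf be)).
  assert (Hbe' : Gam be') by (apply Gam_sub; auto; lra).
  assert (d P (p (pf be t')) > delta).
  { pose proof (cm_lip B p delta (conj Bp (conj C1 C2)) (pf be t') P') as L1.
    pose proof (Lip_mono delta _ _ D1). pose proof (C1 P' (Bp' x)) as E2. rewrite dsym in E2.
    pose proof (tri P (p (pf be t')) P'). pose proof (tri (p (pf be t')) (p P') P').
    change (p' x) with P' in D1, H4. lra. }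
  destruct (C2 x (pf be t') be' Hbe' (conj J1 eq_refl) H4) as [(t'' & Ht'' & D2) _].
  simpl in Ht'', D2.
  destruct (Gam_qg' be t'' (pb be) Hbe ltac:(lra) ltac:(lra)) as [_ Q1].
  rewrite J2 in Q1.
  change (p x) with P in D2.
  assert (D2' : d P (pf be t'') <= delta) by (rewrite dsym; exact D2).
  assert (Rabs mu * d (pf be t'') P <= Rabs mu * delta) by (apply Rmult_le_compat_l; auto).
  destruct (Gam_qg' be t'' t' Hbe ltac:(lra) ltac:(lra)) as [Q2 _].
  rewrite Rabs_left1 in Q1 by lra. rewrite Rabs_left1 in Q2 by lra.
  pose proof (tri P (pf be t'') P'). pose proof (tri (pf be t'') (pf be t') P').
  change (p' x) with P' in D1. lra.
Qed.

Lemma qg_up q s1 s2 D : Gam q -> pa q <= s1 -> s1 <= s2 -> s2 <= pb q ->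
  d (pf q s1) (pf q s2) <= D -> s2 - s1 <= Rabs mu * D + Rabs nu.
Proof.
  intros Hq H1 H2 H3 HD. destruct (Gam_qg' q s1 s2 Hq ltac:(lra) ltac:(lra)) as [_ Q].
  rewrite Rabs_left1 in Q by lra. pose proof (Rabs_pos mu).
  assert (Rabs mu * d (pf q s1) (pf q s2) <= Rabs mu * D) by (apply Rmult_le_compat_l; auto). lra.
Qed.

Lemma qg_lo q s1 s2 : Gam q -> pa q <= s1 -> s1 <= s2 -> s2 <= pb q ->
  d (pf q s1) (pf q s2) <= s2 - s1.
Proof.
  intros Hq H1 H2 H3. destruct (Gam_qg' q s1 s2 Hq ltac:(lra) ltac:(lra)) as [Q _].
  rewrite Rabs_left1 in Q by lra. lra.
Qed.

Definition Rmorse delta := 4 * Rabs mu * delta + Rabs nu + 3 * delta.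

Lemma morse B p delta : constricting_map Gam B p delta ->
  forall be a b, Gam be -> joins be a b -> B a -> B b ->
  forall t, pa be <= t <= pb be -> d (pf be t) (p (pf be t)) <= Rmorse delta.
Proof.
  intros Hc be a b Hbe [J1 J2] Ba Bb t Ht.
  pose proof (cm_delta_nonneg B p delta a Hc) as Hd.
  pose proof (Rabs_pos mu). pose proof (Rabs_pos nu).
  assert (0 <= Rabs mu * delta) by (apply Rmult_le_pos; auto).
  destruct Hc as (Bp & C1 & C2). unfold Rmorse.
  set (c := pf be t).
  pose proof (C1 a Ba) as Ea. pose proof (C1 b Bb) as Eb.
  assert (Hs1 : Gam (mkPath (pa be) t (pf be))) by (apply Gam_sub; auto; lra).
  assert (Hs2 : Gam (mkPath t (pb be) (pf be))) by (apply Gam_sub; auto; lra).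
  destruct (Rle_dec (d (p a) (p c)) delta) as [Hac|Hac];
  destruct (Rle_dec (d (p c) (p b)) delta) as [Hcb|Hcb].
  -
    assert (Dab : d a b <= 4 * delta).
    { pose proof (tri a (p a) b) as T1. pose proof (tri (p a) (p c) b) as T2.
      pose proof (tri (p c) (p b) b) as T3. rewrite (dsym (p b) b) in T3. lra. }
    assert (Q : pb be - pa be <= Rabs mu * (4 * delta) + Rabs nu).
    { apply (qg_up be); auto; try lra. rewrite J1, J2. auto. }
    pose proof (qg_lo be (pa be) t Hbe ltac:(lra) ltac:(lra) ltac:(lra)) as L. rewrite J1 in L. fold c in L.
    pose proof (tri c a (p c)) as T1. pose proof (tri a (p a) (p c)) as T2. rewrite dsym in L. lra.
  -
    apply Rnot_le_lt in Hcb.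
    destruct (C2 c b _ Hs2 (conj eq_refl J2) Hcb) as [(t2 & Ht2 & D2) _]. simpl in Ht2, D2.
    assert (Dq : d (pf be (pa be)) (pf be t2) <= 3 * delta).
    { rewrite J1. pose proof (tri a (p a) (pf be t2)) as T1. pose proof (tri (p a) (p c) (pf be t2)) as T2.
      rewrite (dsym (p c)) in T2. lra. }
    pose proof (qg_up be (pa be) t2 _ Hbe ltac:(lra) ltac:(lra) ltac:(lra) Dq) as Q.
    pose proof (qg_lo be (pa be) t Hbe ltac:(lra) ltac:(lra) ltac:(lra)) as L. rewrite J1 in L. fold c in L.
    pose proof (tri c a (p c)) as T1. pose proof (tri a (p a) (p c)) as T2. rewrite dsym in L. lra.
  -
    apply Rnot_le_lt in Hac.
    destruct (C2 a c _ Hs1 (conj J1 eq_refl) Hac) as [_ (t1 & Ht1 & D1)]. simpl in Ht1, D1.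
    assert (Dq : d (pf be t1) (pf be (pb be)) <= 3 * delta).
    { rewrite J2. pose proof (tri (pf be t1) (p c) b) as T1. pose proof (tri (p c) (p b) b) as T2.
      rewrite (dsym (p b) b) in T2. lra. }
    pose proof (qg_up be t1 (pb be) _ Hbe ltac:(lra) ltac:(lra) ltac:(lra) Dq) as Q.
    pose proof (qg_lo be t (pb be) Hbe ltac:(lra) ltac:(lra) ltac:(lra)) as L. rewrite J2 in L. fold c in L.
    pose proof (tri c b (p c)) as T1. pose proof (tri b (p b) (p c)) as T2.
    rewrite (dsym (p b) (p c)) in T2. lra.
  - apply Rnot_le_lt in Hac. apply Rnot_le_lt in Hcb.
    destruct (C2 a c _ Hs1 (conj J1 eq_refl) Hac) as [_ (t1 & Ht1 & D1)]. simpl in Ht1, D1.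
    destruct (C2 c b _ Hs2 (conj eq_refl J2) Hcb) as [(t2 & Ht2 & D2) _]. simpl in Ht2, D2.
    assert (Dq : d (pf be t1) (pf be t2) <= 2 * delta).
    { pose proof (tri (pf be t1) (p c) (pf be t2)) as T. rewrite (dsym (p c) (pf be t2)) in T. lra. }
    pose proof (qg_up be t1 t2 _ Hbe ltac:(lra) ltac:(lra) ltac:(lra) Dq) as Q.
    pose proof (qg_lo be t1 t Hbe ltac:(lra) ltac:(lra) ltac:(lra)) as L. fold c in L.
    pose proof (tri c (pf be t1) (p c)) as T. rewrite dsym in L. lra.
Qed.

Local Infix "**" := (gmul G) (at level 40, left associativity).

Lemma act1 x : act (gone G) x = x.
Proof. destruct Hpsg as (_&(H&_)&_). auto. Qed.
Lemma actM f h x : act (f ** h) x = act f (act h x).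
Proof. destruct Hpsg as (_&(_&H&_)&_). auto. Qed.
Lemma act_iso f x y : d (act f x) (act f y) = d x y.
Proof. destruct Hpsg as (_&(_&_&H)&_). auto. Qed.
Lemma act_inv_l f x : act (ginv G f) (act f x) = x.
Proof. rewrite <- actM, gmulV, act1. auto. Qed.
Lemma act_inv_r f x : act f (act (ginv G f) x) = x.
Proof. rewrite <- actM, gmulVr, act1. auto. Qed.
Lemma Gam_inv f q : Gam q -> Gam (mkPath (pa q) (pb q) (fun t => act f (pf q t))).
Proof. destruct Hpsg as (_&_&_&H&_). auto. Qed.

Lemma cm_transport B p delta f : constricting_map Gam B p delta ->
  constricting_map Gam (fun z => B (act (ginv G f) z)) (fun z => act f (p (act (ginv G f) z))) delta.
Proof.
  intros (C0&C1&C2). split; [|split].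
  - intro x. simpl. rewrite act_inv_l. auto.
  - intros x Bx. rewrite <- (act_inv_r f x) at 1. rewrite act_iso. auto.
  - intros x y q Hq [J1 J2] Hgt. rewrite act_iso in Hgt.
    set (q' := mkPath (pa q) (pb q) (fun t => act (ginv G f) (pf q t))).
    assert (Hq' : Gam q') by (apply Gam_inv; auto).
    assert (Jq : joins q' (act (ginv G f) x) (act (ginv G f) y)) by (split; simpl; congruence).
    destruct (C2 _ _ q' Hq' Jq Hgt) as [(t1&Ht1&D1) (t2&Ht2&D2)]. simpl in *.
    split; [exists t1 | exists t2]; split; auto.
    + rewrite <- (act_iso (ginv G f)), act_inv_l. auto.
    + rewrite <- (act_iso (ginv G f)), act_inv_l. auto.
Qed.

Lemma cm_ext B B' p delta : (forall z, B z <-> B' z) -> constricting_map Gam B p delta -> constricting_map Gam B' p delta.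
Proof.
  intros E (C0&C1&C2). split; [|split]; auto.
  - intro x. apply E. auto.
  - intros x Bx. apply C1. apply E. auto.
Qed.

Lemma cm_equiv B p delta f : constricting_map Gam B p delta ->
  (forall z, B z <-> B (act f z)) ->
  forall x, d (p (act f x)) (act f (p x)) <= Kuniq delta.
Proof.
  intros Hc Hf x.
  assert (Hc' : constricting_map Gam B (fun z => act f (p (act (ginv G f) z))) delta).
  { apply (cm_ext (fun z => B (act (ginv G f) z))).
    - intro z. rewrite (Hf (act (ginv G f) z)), act_inv_r. tauto.
    - apply cm_transport. auto. }
  pose proof (cm_unique B p _ delta Hc Hc' (act f x)) as U. simpl in U.
  rewrite act_inv_l in U. auto.
Qed.

Section Elem.
Variables (g : G) (A : X -> Prop) (piA : X -> X) (delta : R).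
Hypothesis Hce : constricting_element act Gam g A piA delta.
Variable x0 : X.
Hypothesis Hx0 : A x0.
Local Notation zp := (zpow G g).
Hypothesis Hcob : forall y, A y -> exists m, d y (act (zp m) x0) <= delta.
Local Notation E := (elem_closure act A).

Lemma cmA : constricting_map Gam A piA delta.
Proof. destruct Hce as (_&_&H&_). auto. Qed.

Lemma delta_ge0 : 0 <= delta.
Proof. apply (cm_delta_nonneg A piA delta x0 cmA). Qed.

Lemma zp_inj a b : zp a = zp b -> a = b.
Proof.
  intro Hab. destruct Hce as (Hio&_).
  assert (H1 : zp (a - b) = gone G).
  { unfold Z.sub. rewrite zpow_add, zpow_opp, Hab. apply gmulVr. }
  destruct (Z_lt_le_dec 0 (a - b)).
  - exfalso. apply (Hio (Z.to_nat (a - b))). lia. rewrite <- zpow_nat, Z2Nat.id by lia. auto.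
  - destruct (Z_lt_le_dec (a - b) 0); [|lia]. exfalso.
    apply (Hio (Z.to_nat (b - a))). lia. rewrite <- zpow_nat, Z2Nat.id by lia.
    replace (b - a)%Z with (- (a - b))%Z by lia. rewrite zpow_opp, H1. apply inv_one.
Qed.

Lemma A_zp_fwd m : forall z, A z -> A (act (zp m) z).
Proof.
  destruct Hce as (_&Hg&_).
  induction m using Z.peano_ind; intros z Hz.
  - rewrite zpow0, act1. auto.
  - rewrite <- Z.add_1_r, zpow_succ, actM. apply Hg. auto.
  - rewrite <- Z.sub_1_r, zpow_pred, actM. apply Hg. auto.
Qed.

Lemma A_zp m z : A z <-> A (act (zp m) z).
Proof.
  split. apply A_zp_fwd. intro H. apply (A_zp_fwd (- m)) in H.
  rewrite <- actM, <- zpow_add in H. replace (- m + m)%Z with 0%Z in H by lia. rewrite zpow0, act1 in H. auto.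
Qed.

Lemma equiv_zp m x : d (piA (act (zp m) x)) (act (zp m) (piA x)) <= Kuniq delta.
Proof. apply (cm_equiv A piA delta (zp m) cmA). apply A_zp. Qed.

Lemma zp_bound R : exists B, forall n, d x0 (act (zp n) x0) <= R -> (Z.abs n <= B)%Z.
Proof.
  destruct Hpsg as (_&_&Hpr&_). destruct (Hpr x0 R) as [l Hl].
  assert (forall l : list G, exists B, forall n, In (zp n) l -> (Z.abs n <= B)%Z).
  { induction l0 as [|a l0 IH].
    - exists 0%Z. intros n [].
    - destruct IH as [B HB]. destruct (classic (exists n0, zp n0 = a)) as [[n0 Hn0]|Hno].
      + exists (Z.max (Z.abs n0) B). intros n [Hn|Hn].
        * rewrite Hn in Hn0. apply zp_inj in Hn0. subst. lia.
        * specialize (HB n Hn). lia.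
      + exists B. intros n [Hn|Hn]. exfalso. apply Hno. eauto. auto. }
  destruct (H l) as [B HB]. exists B. intros n Hn. apply HB, Hl. auto.
Qed.

Lemma E_one : E (gone G).
Proof. exists 0. split; intros a Ha; exists a; split; auto; rewrite act1, dxx; lra. Qed.

Lemma E_zp m : E (zp m).
Proof.
  exists 0. split; intros a Ha.
  - exists (act (zp m) a). split. apply A_zp; auto. rewrite dxx. lra.
  - exists (act (zp (- m)) a). split. apply A_zp; auto.
    rewrite <- actM, <- zpow_add. replace (m + - m)%Z with 0%Z by lia. rewrite zpow0, act1, dxx. lra.
Qed.

Lemma E_mul f h : E f -> E h -> E (gmul G f h).
Proof.
  intros [r1 [F1 F2]] [r2 [H1 H2]]. exists (r1 + r2). split.
  - intros a Ha. destruct (H1 a Ha) as (b & Hb & Db). destruct (F1 b Hb) as (c & Hc & Dc).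
    exists c. split; auto. rewrite actM. pose proof (tri (act f (act h a)) (act f b) c). rewrite act_iso in H. lra.
  - intros b Hb. destruct (F2 b Hb) as (a1 & Ha1 & D1). destruct (H2 a1 Ha1) as (a2 & Ha2 & D2).
    exists a2. split; auto. rewrite actM. pose proof (tri b (act f a1) (act f (act h a2))). rewrite act_iso in H. lra.
Qed.

Lemma E_inv f : E f -> E (ginv G f).
Proof.
  intros [r [F1 F2]]. exists r. split.
  - intros a Ha. destruct (F2 a Ha) as (b & Hb & Db). exists b. split; auto.
    rewrite <- (act_iso f), act_inv_r. auto.
  - intros b Hb. destruct (F1 b Hb) as (a & Ha & Da). exists a. split; auto.
    rewrite <- (act_iso f), act_inv_r. auto.
Qed.

Lemma E_gpow f n : E f -> E (gpow f n).
Proof. intro Hf. induction n; simpl. apply E_one. apply E_mul; auto. Qed.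

Lemma nodup_map_seq (F : nat -> G) : forall k a,
  (forall i j, (a <= i)%nat -> (i < j)%nat -> F i <> F j) -> NoDup (map F (seq a k)).
Proof.
  induction k; intros a Hij; simpl. constructor.
  constructor.
  - intro Hin. apply in_map_iff in Hin. destruct Hin as (x & Hx & Hin). apply in_seq in Hin.
    apply (Hij a x); auto; lia.
  - apply IHk. intros i j Hi Hj. apply Hij; lia.
Qed.

Lemma pigeon (F : nat -> G) (l : list G) : (forall n, In (F n) l) -> exists i j, (i < j)%nat /\ F i = F j.
Proof.
  intros Hin. apply NNPP. intro Hno.
  assert (Hd : forall i j, (0 <= i)%nat -> (i < j)%nat -> F i <> F j).
  { intros i j _ Hij He. apply Hno. eauto. }
  pose proof (nodup_map_seq F (S (length l)) 0 Hd) as ND.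
  assert (incl (map F (seq 0 (S (length l)))) l).
  { intros y Hy. apply in_map_iff in Hy. destruct Hy as (x & <- & _). auto. }
  pose proof (NoDup_incl_length ND H). rewrite length_map, length_seq in H0. lia.
Qed.

Lemma act_zp_cancel m y : act (zp m) (act (zp (- m)) y) = y.
Proof. rewrite <- actM, <- zpow_add. replace (m + - m)%Z with 0%Z by lia. rewrite zpow0, act1. auto. Qed.

Lemma conj_power f : E f -> exists N, (1 <= N)%Z /\ exists P, gconj G f (zp N) = zp P.
Proof.
  intros [r [F1 F2]].
  destruct (F2 x0 Hx0) as (a & Ha & Da).
  destruct Hpsg as (_&_&Hpr&_). destruct (Hpr x0 (2 * r + delta)) as [l Hl].
  assert (Hm : forall n : nat, exists m : Z,
    d x0 (act (gmul G (zp m) (gconj G f (zp (Z.of_nat n)))) x0) <= 2 * r + delta).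
  { intro n. set (zn := zp (Z.of_nat n)).
    assert (Hza : A (act zn a)) by (apply A_zp; auto).
    destruct (F1 _ Hza) as (b & Hb & Db).
    destruct (Hcob b Hb) as (m & Dm).
    exists (- m)%Z.
    rewrite <- (act_iso (zp m)), actM, act_zp_cancel.
    unfold gconj. rewrite !actM.
    assert (Dy : d (act f (act zn a)) (act f (act zn (act (ginv G f) x0))) <= r).
    { rewrite !act_iso. rewrite <- (act_iso f a), act_inv_r, dsym. auto. }
    pose proof (tri (act (zp m) x0) b (act f (act zn (act (ginv G f) x0)))) as T1.
    pose proof (tri b (act f (act zn a)) (act f (act zn (act (ginv G f) x0)))) as T2.
    rewrite dsym in Dm. rewrite (dsym b (act f (act zn a))) in T2. lra. }
  set (mf := fun n => proj1_sig (constructive_indefinite_description _ (Hm n))).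
  assert (Hmf : forall n, d x0 (act (gmul G (zp (mf n)) (gconj G f (zp (Z.of_nat n)))) x0) <= 2 * r + delta).
  { intro n. unfold mf. destruct (constructive_indefinite_description _ (Hm n)). simpl. auto. }
  destruct (pigeon (fun n => gmul G (zp (mf n)) (gconj G f (zp (Z.of_nat n)))) l) as (i & j & Hij & Heq).
  { intro n. apply Hl. apply Hmf. }
  simpl in Heq.
  exists (Z.of_nat j - Z.of_nat i)%Z. split. lia.
  exists (mf i - mf j)%Z.
  set (ci := gconj G f (zp (Z.of_nat i))) in *. set (cj := gconj G f (zp (Z.of_nat j))) in *.
  assert (Hcj : cj = gmul G (zp (mf i - mf j)) ci).
  { apply (gmul_cancel_l G (zp (mf j))). rewrite <- Heq, gmulA, <- zpow_add.
    f_equal. f_equal. lia. }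
  unfold Z.sub at 1. rewrite zpow_add, gconj_mul, zpow_opp, gconj_inv. fold cj. fold ci.
  rewrite Hcj, <- gmulA, gmulVr, gmul1r. auto.
Qed.

Definition Rdc := Rmorse delta + 3 * delta.

Lemma dcoset f : E f -> exists m m2, d x0 (act (gmul G (gmul G (zp m) f) (zp m2)) x0) <= Rdc.
Proof.
  intros Hf. pose proof Hf as [r [F1 F2]].
  pose proof delta_ge0 as Hd.
  pose proof (cm_transport A piA delta f cmA) as Hcf.
  set (pf' := fun z => act f (piA (act (ginv G f) z))) in Hcf.
  set (Bf := fun z => A (act (ginv G f) z)) in Hcf.
  set (r2 := r + delta + Lip delta r).
  assert (Hb : forall b, A b -> d b (pf' b) <= r2).
  { intros b Hb. destruct (F2 b Hb) as (a' & Ha' & Da').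
    destruct Hcf as (C0 & C1 & C2).
    assert (Bf (act f a')) by (unfold Bf; rewrite act_inv_l; auto).
    pose proof (C1 _ H) as E1.
    pose proof (cm_lip _ _ _ (conj C0 (conj C1 C2)) b (act f a')) as L.
    pose proof (Lip_mono delta _ _ Da').
    pose proof (tri b (act f a') (pf' b)). pose proof (tri (act f a') (pf' (act f a')) (pf' b)).
    rewrite (dsym (pf' (act f a')) (pf' b)) in H2. unfold r2. lra. }
  destruct (zp_bound (delta + 2 * r2 + 1)) as [B HB].
  set (n := (B + 1)%Z).
  assert (Dn : d x0 (act (zp n) x0) > delta + 2 * r2 + 1).
  { apply Rnot_le_gt. intro Hle. specialize (HB n Hle). unfold n in HB. lia. }
  set (y := act (zp n) x0).
  assert (Ay : A y) by (apply A_zp; auto).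
  assert (Dp : d (pf' x0) (pf' y) > delta).
  { pose proof (Hb x0 Hx0). pose proof (Hb y Ay).
    pose proof (tri x0 (pf' x0) y). pose proof (tri (pf' x0) (pf' y) y).
    rewrite (dsym (pf' y) y) in H2. fold y in Dn. lra. }
  destruct (Gam_join x0 y) as (be & Hbe & J).
  destruct Hcf as (C0 & C1 & C2).
  destruct (C2 x0 y be Hbe J Dp) as [(t & Ht & Dt) _].
  pose proof (morse A piA delta cmA be x0 y Hbe J Hx0 Ay t Ht) as Mo.
  destruct cmA as (PA & _ & _).
  destruct (Hcob _ (PA (pf be t))) as (m & Dm).
  destruct (Hcob _ (PA (act (ginv G f) x0))) as (m2 & Dm2).
  exists (- m)%Z, m2.
  rewrite <- (act_iso (zp m)), !actM, act_zp_cancel.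
  assert (D2 : d (pf' x0) (act f (act (zp m2) x0)) <= delta).
  { unfold pf'. rewrite act_iso. auto. }
  pose proof (tri (act (zp m) x0) (piA (pf be t)) (act f (act (zp m2) x0))) as T1.
  pose proof (tri (piA (pf be t)) (pf be t) (act f (act (zp m2) x0))) as T2.
  pose proof (tri (pf be t) (pf' x0) (act f (act (zp m2) x0))) as T3.
  rewrite dsym in Dm. rewrite (dsym (piA (pf be t)) (pf be t)) in T2.
  unfold Rdc. lra.
Qed.

Lemma conj_zp_comm a N : gconj G (zp a) (zp N) = zp N.
Proof. unfold gconj. rewrite zpow_comm, <- gmulA, gmulVr, gmul1r. auto. Qed.

Lemma gconj_1 x : gconj G (gone G) x = x.
Proof. unfold gconj. rewrite inv_one, gmul1, gmul1r. auto. Qed.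

Lemma uniformN (l : list G) : exists N, (1 <= N)%Z /\
  forall h, In h l -> E h -> exists P, gconj G h (zp N) = zp P.
Proof.
  induction l as [|a l IH].
  - exists 1%Z. split. lia. intros h [].
  - destruct IH as (Nl & HNl & Hl).
    destruct (classic (E a)) as [Ea|Ea].
    + destruct (conj_power a Ea) as (Na & HNa & Pa & HPa).
      exists (Na * Nl)%Z. split. nia.
      intros h [<-|Hh] Eh.
      * exists (Pa * Nl)%Z. rewrite <- zpow_mul, gconj_zpow, HPa, zpow_mul. auto.
      * destruct (Hl h Hh Eh) as (Pl & HPl). exists (Pl * Na)%Z.
        rewrite Z.mul_comm, <- zpow_mul, gconj_zpow, HPl, zpow_mul. auto.
    + exists Nl. split; auto. intros h [<-|Hh] Eh. contradiction. auto.
Qed.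

Lemma uniformBp N (l : list G) : (forall h, In h l -> E h -> exists P, gconj G h (zp N) = zp P) ->
  exists Bp, forall h, In h l -> E h -> exists P, gconj G h (zp N) = zp P /\ (Z.abs P <= Bp)%Z.
Proof.
  induction l as [|a l IH]; intros Hl.
  - exists 0%Z. intros h [].
  - destruct IH as (Bl & HBl). { intros h Hh Eh. apply Hl; simpl; auto. }
    destruct (classic (E a)) as [Ea|Ea].
    + destruct (Hl a (or_introl eq_refl) Ea) as (Pa & HPa).
      exists (Z.max (Z.abs Pa) Bl). intros h [<-|Hh] Eh.
      * exists Pa. split; auto. lia.
      * destruct (HBl h Hh Eh) as (P & HP & HPb). exists P. split; auto. lia.
    + exists Bl. intros h [<-|Hh] Eh. contradiction. auto.
Qed.

Lemma allE : exists N, (1 <= N)%Z /\ exists Bp, forall f, E f ->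
  exists P, gconj G f (zp N) = zp P /\ (Z.abs P <= Bp)%Z /\ P <> 0%Z.
Proof.
  destruct Hpsg as (_&_&Hpr&_). destruct (Hpr x0 Rdc) as [L0 HL0].
  destruct (uniformN L0) as (N & HN & HL). destruct (uniformBp N L0 HL) as (Bp & HB).
  exists N. split; auto. exists Bp. intros f Ef.
  destruct (dcoset f Ef) as (m & m2 & Dm).
  set (h := gmul G (gmul G (zp m) f) (zp m2)) in Dm.
  assert (Eh : E h) by (apply E_mul; [apply E_mul|]; auto using E_zp).
  destruct (HB h (HL0 _ Dm) Eh) as (P & HP & HPb).
  assert (Hf : f = gmul G (gmul G (zp (- m)) h) (zp (- m2))).
  { unfold h. rewrite !gmulA, <- zpow_add. replace (- m + m)%Z with 0%Z by lia.
    rewrite zpow0, gmul1, <- gmulA, <- zpow_add. replace (m2 + - m2)%Z with 0%Z by lia.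
    rewrite zpow0, gmul1r. auto. }
  assert (HfP : gconj G f (zp N) = zp P).
  { rewrite Hf, <- !gconj_comp, conj_zp_comm, HP, conj_zp_comm. auto. }
  exists P. split; [|split]; auto.
  intros ->. assert (HH : gconj G f (zp N) = gconj G f (zp 0)).
  { rewrite HfP, zpow0, gconj_one. auto. }
    apply (f_equal (gconj G (ginv G f))) in HH. rewrite !gconj_inv_l in HH.
    apply zp_inj in HH. lia.
Qed.

Lemma pow_ineq (N : Z) (j : nat) : (1 <= N)%Z ->
  ((N + 1) ^ (Z.of_nat j) * N >= N ^ (Z.of_nat j) * (N + Z.of_nat j))%Z.
Proof.
  intros HN. induction j.
  - change (Z.of_nat 0) with 0%Z. rewrite !Z.pow_0_r. lia.
  - rewrite Nat2Z.inj_succ, !Z.pow_succ_r by lia.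
    assert (0 <= N ^ Z.of_nat j)%Z by (apply Z.pow_nonneg; lia).
    nia.
Qed.

Section PM.
Variables (N Bp : Z).
Hypothesis HN : (1 <= N)%Z.
Hypothesis HallE : forall f, E f -> exists P, gconj G f (zp N) = zp P /\ (Z.abs P <= Bp)%Z /\ P <> 0%Z.

Lemma conj_iter f P : gconj G f (zp N) = zp P -> forall j : nat,
  gconj G (gpow f j) (zp (N ^ Z.of_nat j)) = zp (P ^ Z.of_nat j).
Proof.
  intros HP j. induction j.
  - simpl. rewrite gconj_1. auto.
  - rewrite Nat2Z.inj_succ, !Z.pow_succ_r by lia. simpl gpow.
    rewrite <- gconj_comp. rewrite (Z.mul_comm N), <- zpow_mul, gconj_zpow, IHj, zpow_mul.
    rewrite Z.mul_comm, <- zpow_mul, gconj_zpow, HP, zpow_mul. auto.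
Qed.

Lemma grow f P : E f -> gconj G f (zp N) = zp P -> (Z.abs P > N)%Z -> False.
Proof.
  intros Ef HP HPN.
  destruct (HallE f Ef) as (P0 & _ & HP0 & _).
  assert (HBp : (0 <= Bp)%Z) by lia.
  set (j := Z.to_nat Bp).
  destruct (HallE (gpow f (S j)) (E_gpow f (S j) Ef)) as (Q & HQ & HQb & _).
  pose proof (conj_iter f P HP (S j)) as Hit.
  rewrite Nat2Z.inj_succ, Z.pow_succ_r in Hit by lia.
  rewrite <- zpow_mul, gconj_zpow, HQ, zpow_mul in Hit.
  apply zp_inj in Hit.
  assert (Habs : (Z.abs Q * N ^ Z.of_nat j = Z.abs P ^ Z.succ (Z.of_nat j))%Z).
  { rewrite <- Z.abs_pow, <- Hit. rewrite Z.abs_mul.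
    rewrite (Z.abs_eq (N ^ _)) by (apply Z.pow_nonneg; lia). auto. }
  assert (Hmono : ((N + 1) ^ Z.succ (Z.of_nat j) <= Z.abs P ^ Z.succ (Z.of_nat j))%Z).
  { apply Z.pow_le_mono_l. lia. }
  pose proof (pow_ineq N j HN) as Hi.
  rewrite Z.pow_succ_r in Hmono by lia.
  assert (Hj : Z.of_nat j = Bp) by (unfold j; lia).
  rewrite Hj in Hi, Habs, Hmono.
  assert (0 < N ^ Bp)%Z by (apply Z.pow_pos_nonneg; lia).
  assert (0 <= (N+1) ^ Bp)%Z by (apply Z.pow_nonneg; lia).
  nia.
Qed.

Lemma pm f : E f -> gconj G f (zp N) = zp N \/ gconj G f (zp N) = zp (- N).
Proof.
  intros Ef. destruct (HallE f Ef) as (P & HP & _ & HP0).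
  destruct (Z_lt_le_dec N (Z.abs P)).
  - exfalso. apply (grow f P Ef HP). lia.
  - destruct (Z_lt_le_dec (Z.abs P) N).
    + exfalso. destruct (HallE (ginv G f) (E_inv f Ef)) as (P' & HP' & _ & _).
      assert (H1 : gconj G (ginv G f) (zp P) = zp N) by (rewrite <- HP, gconj_inv_l; auto).
      assert (H2 : (P' * P = N * N)%Z).
      { apply zp_inj. rewrite <- zpow_mul, <- HP', <- gconj_zpow, zpow_mul.
        rewrite Z.mul_comm, <- zpow_mul, gconj_zpow, H1, zpow_mul. auto. }
      apply (grow (ginv G f) P' (E_inv f Ef) HP'). nia.
    + rewrite HP. destruct (Z.abs_spec P) as [[_ Ea]|[_ Ea]].
      * left. f_equal. lia.
      * right. f_equal. lia.
Qed.

End PM.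

Lemma conj_mul_swap k x : gmul G k x = gmul G (gconj G k x) k.
Proof. unfold gconj. rewrite <- gmulA, gmulV, gmul1r. auto. Qed.

Lemma main_core eps theta : 0 <= eps -> 0 <= theta ->
  exists M : nat, (1 <= M)%nat /\
    forall (H : G -> Prop) (Y : X -> Prop),
      is_subgroup H ->
      (exists y, Y y) ->
      (forall h y, H h -> Y y -> Y (act h y)) ->
      diamA_le piA Y eps ->
      forall u : G,
        generated (fun s => s = gpow g M \/ (H s /\ elem_closure act A s)) u ->
        ~ (H u /\ elem_closure act A u) ->
        dA_gt piA Y (translate act u Y) theta.
Proof.
  intros Heps Hth.
  destruct allE as (N & HN & Bp & HallE).
  pose proof delta_ge0 as Hd.
  set (R0 := theta + 1 + eps + Kuniq delta + 2 * delta).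
  destruct (zp_bound R0) as [B HB].
  set (B' := Z.max B 0).
  set (Mz := (N * (B' + 1))%Z).
  assert (HMz : (1 <= Mz)%Z) by (unfold Mz, B'; nia).
  assert (Hconj : forall k, E k -> forall j, exists j', gconj G k (zp (j * Mz)) = zp (j' * Mz)).
  { intros k Ek j. destruct (pm N Bp HN HallE k Ek) as [Hk|Hk].
    - exists j. replace (j * Mz)%Z with (N * ((B' + 1) * j))%Z by (unfold Mz; ring).
      rewrite <- zpow_mul, gconj_zpow, Hk, zpow_mul. auto.
    - exists (- j)%Z. replace (j * Mz)%Z with (N * ((B' + 1) * j))%Z by (unfold Mz; ring).
      rewrite <- zpow_mul, gconj_zpow, Hk, zpow_mul. f_equal. unfold Mz. ring. }
  exists (Z.to_nat Mz). split. lia.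
  intros H Y HH [y0 Hy0] HY Hdiam u Hu Hnu.
  destruct HH as (H1 & HM & HI).
  set (S := fun x => exists j k, H k /\ E k /\ x = gmul G (zp (j * Mz)) k).
  assert (HS : S u).
  { apply Hu.
    - split; [|split].
      + exists 0%Z, (gone G). split; auto. split. apply E_one. rewrite Z.mul_0_l, zpow0, gmul1. auto.
      + intros x y (a & k & Hk & Ek & ->) (b & k' & Hk' & Ek' & ->).
        destruct (Hconj k Ek b) as (b' & Hb').
        exists (a + b')%Z, (gmul G k k'). split. auto. split. apply E_mul; auto.
        rewrite (gmulA G (gmul G (zp (a*Mz)) k) (zp (b*Mz)) k'), <- (gmulA G (zp (a*Mz)) k (zp (b*Mz))).
        rewrite (conj_mul_swap k (zp (b*Mz))), Hb', (gmulA G (zp (a*Mz)) (zp (b'*Mz)) k), <- zpow_add, <- gmulA.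
        f_equal. f_equal. ring.
      + intros x (a & k & Hk & Ek & ->).
        destruct (Hconj (ginv G k) (E_inv k Ek) (- a)%Z) as (a' & Ha').
        exists a', (ginv G k). split. auto. split. apply E_inv; auto.
        rewrite inv_mul, <- zpow_opp, conj_mul_swap. f_equal. rewrite <- Ha'. f_equal. f_equal. lia.
    - intros s [->|[Hs Es]].
      + exists 1%Z, (gone G). split; auto. split. apply E_one.
        rewrite gmul1r, <- zpow_nat, Z2Nat.id by lia. f_equal. lia.
      + exists 0%Z, s. split; auto. split; auto. rewrite Z.mul_0_l, zpow0, gmul1. auto. }
  destruct HS as (j & k & Hk & Ek & ->).
  assert (Hj : j <> 0%Z).
  { intros ->. apply Hnu. rewrite Z.mul_0_l, zpow0, gmul1. split; auto. }
  set (n := (j * Mz)%Z).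
  assert (Hphi : d x0 (act (zp n) x0) > R0).
  { apply Rnot_le_gt. intro Hle. specialize (HB n Hle). unfold n, Mz, B' in HB. nia. }
  exists (theta + 1). split. lra.
  intros y z Hy (y' & Hy' & ->).
  rewrite actM. set (y'' := act k y').
  assert (Hy'' : Y y'') by (apply HY; auto).
  destruct cmA as (PA & _ & _).
  set (a := piA y'').
  destruct (Hcob a (PA y'')) as (m & Dm).
  assert (Hcomm : act (zp n) (act (zp m) x0) = act (zp m) (act (zp n) x0)).
  { rewrite <- !actM, zpow_comm. auto. }
  assert (Dphi : d (act (zp m) x0) (act (zp n) (act (zp m) x0)) = d x0 (act (zp n) x0)).
  { rewrite Hcomm, act_iso. auto. }
  assert (Dm' : d (act (zp n) a) (act (zp n) (act (zp m) x0)) <= delta) by (rewrite act_iso; auto).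
  pose proof (equiv_zp n y'') as Eq. fold a in Eq.
  pose proof (Hdiam y y'' Hy Hy'') as Dd. fold a in Dd.
  pose proof (tri (act (zp m) x0) a (act (zp n) (act (zp m) x0))) as T1.
  pose proof (tri a (act (zp n) a) (act (zp n) (act (zp m) x0))) as T2.
  pose proof (tri a (piA y) (act (zp n) a)) as T3.
  pose proof (tri (piA y) (piA (act (zp n) y'')) (act (zp n) a)) as T4.
  rewrite (dsym a (piA y)) in T3. rewrite dsym in Dm.
  unfold R0 in Hphi. lra.
Qed.

End Elem.
End Geo.

Theorem mainTheorem18 (mu nu : R) (G : Group) (X : MetricSpace)
  (act : G -> X -> X) (Gam : Path X -> Prop)
  (g : G) (A : X -> Prop) (piA : X -> X) (delta : R) :
  path_system_group mu nu act Gam ->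
  constricting_element act Gam g A piA delta ->
  forall eps theta : R, 0 <= eps -> 0 <= theta ->
  exists M : nat, (1 <= M)%nat /\
    forall (H : G -> Prop) (Y : X -> Prop),
      is_subgroup H ->
      (exists y, Y y) ->
      (forall h y, H h -> Y y -> Y (act h y)) ->
      diamA_le piA Y eps ->
      forall u : G,
        generated (fun s => s = gpow g M \/ (H s /\ elem_closure act A s)) u ->
        ~ (H u /\ elem_closure act A u) ->
        dA_gt piA Y (translate act u Y) theta.
Proof.
  intros Hpsg Hce.
  pose proof Hce as (_&_&_&x0&Hx0&Hc).
  assert (Hcob : forall y, A y -> exists m, Defs.dist X y (act (zpow G g m) x0) <= delta).
  { intros y Hy. destruct (Hc y Hy) as (n & [Dn|Dn]).
    - exists (Z.of_nat n). rewrite zpow_nat. auto.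
    - exists (- Z.of_nat n)%Z. rewrite zpow_opp, zpow_nat, gpow_inv. auto. }
  exact (main_core mu nu G X act Gam Hpsg g A piA delta Hce x0 Hx0 Hcob).
Qed.
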